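(* Semi-stable semantics is not serialisable: there is no selection function $\alpha$ and termination function $\beta$ such that $\mathrm{sst}(F)=\mathcal{E}^{\alpha,\beta}(F)$ for every abstract argumentation framework $F$.
   Context: An abstract argumentation framework (AF) is a pair $F=(A,R)$ with $A$ a finite subset of a fixed universal set of arguments $\mathfrak{A}$ and $R\subseteq A\times A$ ($a\to b$ means $(a,b)\in R$). For $S\subseteq A$: $S^+=\{a\mid \exists b\in S: b\to a\}$, $S^-=\{a\mid\exists b\in S: a\to b\}$; for sets $S,S'$, $S\to S'$ means $S^+\cap S'\neq\emptyset$. $S$ is admissible if it is conflict-free and every attacker of an element of $S$ is attacked by some element of $S$. A semi-stable extension is an admissible set $E$ such that $E\cup E^+$ is inclusion-maximal among all sets $E'\cup E'^+$ with $E'$ admissible; $\mathrm{sst}(F)$ is the set of semi-stable extensions. An initial set is a non-empty admissible set with no non-empty admissible proper subset; $\mathrm{IS}(F)$ is the set of initial sets. An initial set $S$ is unattacked if $S^-=\emptyset$; unchallenged if $S^-\neq\emptyset$ and no $S'\in\mathrm{IS}(F)$ has $S'\to S$; challenged if some $S'\in\mathrm{IS}(F)$ has $S'\to S$. Write $\mathrm{IS}^{u}(F),\mathrm{IS}^{uc}(F),\mathrm{IS}^{c}(F)$ for these sets. The reduct is $F^S=(A',R\cap(A'\times A'))$ with $A'=A\setminus(S\cup S^+)$. A selection function $\alpha$ maps any three sets $X,Y,Z$ of sets of arguments to a subset of $X\cup Y\cup Z$; a termination function $\beta$ maps pairs $(F,S)$ to $\{0,1\}$. Transitions: $(F,S)\to(F^{S'},S\cup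 S')$ whenever $S'\in\alpha(\mathrm{IS}^u(F),\mathrm{IS}^{uc}(F),\mathrm{IS}^c(F))$. $(F,S)\leadsto^{\alpha,\beta}(F',S')$ means $(F',S')$ is reachable from $(F,S)$ in finitely many (possibly zero) transitions and $\beta(F',S')=1$. $\mathcal{E}^{\alpha,\beta}(F)$ is the set of all $S$ with $(F,\emptyset)\leadsto^{\alpha,\beta}(F',S)$ for some $F'$. A semantics $\sigma$ is serialisable if there exist $\alpha,\beta$ with $\sigma(F)=\mathcal{E}^{\alpha,\beta}(F)$ for all AFs $F$. *)

(* Defs.v *)
From mathcomp Require Import all_boot finmap.
Set Implicit Arguments. Unset Strict Implicit. Unset Printing Implicit Defensive.
Local Open Scope fset_scope.

Notation arg := nat.
Notation argset := {fset arg}.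

Definition setset := argset -> Prop.

Record AF := mkAF { args : argset ; att : {fset (arg * arg)} }.

Definition wf_AF (F : AF) : Prop :=
  forall p, p \in att F -> p.1 \in args F /\ p.2 \in args F.

Definition splus (F : AF) (S : argset) : argset :=
  [fset p.2 | p in att F & p.1 \in S].
Definition sminus (F : AF) (S : argset) : argset :=
  [fset p.1 | p in att F & p.2 \in S].

Definition attacks_set (F : AF) (S S' : argset) : Prop :=
  splus F S `&` S' != fset0.

Definition conflict_free (F : AF) (S : argset) : Prop :=
  forall a b, a \in S -> b \in S -> (a, b) \notin att F.

Definition admissible (F : AF) (S : argset) : Prop :=
  S `<=` args F /\ conflict_free F S /\
  forall a b, b \in S -> (a, b) \in att F ->
    exists2 c, c \in S & (c, a) \in att F.

Definition sst (F : AF) (E : argset) : Prop :=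
  admissible F E /\
  forall E', admissible F E' -> E `|` splus F E `<=` E' `|` splus F E' ->
    E' `|` splus F E' `<=` E `|` splus F E.

Definition initial (F : AF) (S : argset) : Prop :=
  S != fset0 /\ admissible F S /\
  forall S', S' `<` S -> S' != fset0 -> ~ admissible F S'.

Definition IS_u (F : AF) : setset := fun S => initial F S /\ sminus F S = fset0.
Definition IS_uc (F : AF) : setset :=
  fun S => initial F S /\ sminus F S != fset0 /\
           forall S', initial F S' -> ~ attacks_set F S' S.
Definition IS_c (F : AF) : setset :=
  fun S => initial F S /\ exists2 S', initial F S' & attacks_set F S' S.

Definition reduct (F : AF) (S : argset) : AF :=
  let A' := args F `\` (S `|` splus F S) in
  mkAF A' [fset p in att F | (p.1 \in A') && (p.2 \in A')].

Definition selection := setset -> setset -> setset -> setset.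
Definition is_selection (alpha : selection) : Prop :=
  forall X Y Z S, alpha X Y Z S -> X S \/ Y S \/ Z S.
Definition termination := AF -> argset -> bool.

Inductive step (alpha : selection) : AF * argset -> AF * argset -> Prop :=
  | Step F S S' : alpha (IS_u F) (IS_uc F) (IS_c F) S' ->
      step alpha (F, S) (reduct F S', S `|` S').

Inductive reach (alpha : selection) : AF * argset -> AF * argset -> Prop :=
  | reach_refl c : reach alpha c c
  | reach_step c1 c2 c3 : step alpha c1 c2 -> reach alpha c2 c3 -> reach alpha c1 c3.

Definition ext_serial (alpha : selection) (beta : termination) (F : AF) : setset :=
  fun S => exists F', reach alpha (F, fset0) (F', S) /\ beta F' S = true.

Definition serialisable (sigma : AF -> setset) : Prop :=
  exists (alpha : selection) (beta : termination),
    is_selection alpha /\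
    forall F, wf_AF F -> forall S, sigma F S <-> ext_serial alpha beta F S.

(* Main.v *)
Require Import Defs.
From mathcomp Require Import all_boot finmap.
From Stdlib Require Import FunctionalExtensionality PropExtensionality.
Local Open Scope fset_scope.

Lemma splusP F S y : reflect (exists2 x, x \in S & (x,y) \in att F) (y \in splus F S).
Proof.
apply: (iffP idP).
- rewrite /splus. move/imfsetP => [[p1 p2] /= H ->]. rewrite inE /= in H. case/andP: H => H1 H2. by exists p1.
- move=> [x xS xa]. apply/imfsetP. exists (x,y) => //. by rewrite inE /= xa xS.
Qed.
Lemma sminusP F S y : reflect (exists2 x, x \in S & (y,x) \in att F) (y \in sminus F S).
Proof.
apply: (iffP idP).
- rewrite /sminus. move/imfsetP => [[p1 p2] /= H ->]. rewrite inE /= in H. case/andP: H => H1 H2. by exists p2.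
- move=> [x xS xa]. apply/imfsetP. exists (y,x) => //. by rewrite inE /= xa xS.
Qed.

Definition F1 := mkAF [fset 0;1;2] [fset (0,1);(1,0);(2,2)].
Definition F2 := mkAF [fset 0;1;2] [fset (0,1);(1,0);(1,2);(2,2)].

Lemma att1E x y : ((x,y) \in att F1) =
  [|| (x == 0) && (y == 1), (x == 1) && (y == 0) | (x == 2) && (y == 2)].
Proof. rewrite /= !inE !xpair_eqE. by case: x => [|[|[|x]]]; case: y => [|[|[|y]]]. Qed.
Lemma att2E x y : ((x,y) \in att F2) = ((x,y) \in att F1) || (x == 1) && (y == 2).
Proof.
rewrite att1E /= !inE !xpair_eqE.
by case: x => [|[|[|x]]]; case: y => [|[|[|y]]].
Qed.
Lemma args1E x : (x \in args F1) = (x \in args F2). Proof. by []. Qed.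

Lemma wf1 : wf_AF F1.
Proof.
move=> [x y]; rewrite att1E /= !inE.
by case: x => [|[|[|x]]]; case: y => [|[|[|y]]].
Qed.
Lemma wf2 : wf_AF F2.
Proof.
move=> [x y]; rewrite att2E att1E /= !inE.
by case: x => [|[|[|x]]]; case: y => [|[|[|y]]].
Qed.

Lemma att_eq x y : y != 2 -> ((x,y) \in att F1) = ((x,y) \in att F2).
Proof. move=> H; rewrite att2E. by case: (y =P 2) H => // _ _; rewrite andbF orbF. Qed.
Lemma att_sub x y : (x,y) \in att F1 -> (x,y) \in att F2.
Proof. by rewrite att2E => ->. Qed.
Arguments att_sub {x y}.

Lemma cf_no2 F S : (2,2) \in att F -> conflict_free F S -> 2 \notin S.
Proof. move=> H cf; apply/negP => H2. by move: (cf _ _ H2 H2); rewrite H. Qed.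

Lemma adm_eq S : admissible F1 S <-> admissible F2 S.
Proof.
split.
- move=> [sub [cf def]].
  have n2 : 2 \notin S by apply: cf_no2 cf; rewrite att1E.
  have ne b : b \in S -> b != 2 by move=> bS; apply/eqP => E; rewrite -E bS in n2.
  split; first exact sub.
  split.
  + move=> a b aS bS; rewrite -att_eq; [exact: cf | exact: ne].
  + move=> a b bS ab. rewrite -att_eq in ab; last exact: ne.
    have [c cS ca] := def a b bS ab. exists c => //. exact: att_sub.
- move=> [sub [cf def]].
  have n2 : 2 \notin S by apply: cf_no2 cf; rewrite att2E att1E.
  have ne b : b \in S -> b != 2 by move=> bS; apply/eqP => E; rewrite -E bS in n2.
  split; first exact sub.
  split.
  + move=> a b aS bS; rewrite att_eq; [exact: cf | exact: ne].
  + move=> a b bS ab.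
    have [c cS ca] := def a b bS (att_sub ab). exists c => //.
    case: (a =P 2) => [E|/eqP an].
    * subst a. rewrite att1E /= in ab. move/eqP: ab => Eb. subst b.
      by rewrite bS in n2.
    * by rewrite att_eq.
Qed.

Lemma init_eq S : initial F1 S <-> initial F2 S.
Proof.
rewrite /initial. split.
- move=> [a [b c]]; split => //; split; first by apply/adm_eq.
  move=> S' H1 H2 H3; apply: (c S' H1 H2); by apply/adm_eq.
- move=> [a [b c]]; split => //; split; first by apply/adm_eq.
  move=> S' H1 H2 H3; apply: (c S' H1 H2); by apply/adm_eq.
Qed.

Lemma init_no2 S : initial F1 S -> 2 \notin S.
Proof. move=> [_ [[_ [cf _]] _]]; apply: cf_no2 cf; by rewrite att1E. Qed.
Arguments init_no2 {S}.

Lemma sminus_eq S : 2 \notin S -> sminus F1 S = sminus F2 S.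
Proof.
move=> n2; apply/fsetP => y; apply/sminusP/sminusP => [] [x xS xa]; exists x => //.
- rewrite -att_eq //; apply/eqP => E; by rewrite -E xS in n2.
- rewrite att_eq //; apply/eqP => E; by rewrite -E xS in n2.
Qed.

Lemma att_set_eq S' S : 2 \notin S -> attacks_set F1 S' S <-> attacks_set F2 S' S.
Proof.
move=> n2. rewrite /attacks_set.
suff -> : splus F1 S' `&` S = splus F2 S' `&` S by [].
apply/fsetP => y; rewrite !inE.
case yS: (y \in S); rewrite ?andbF ?andbT //.
have ny : y != 2 by apply/eqP => E; rewrite -E yS in n2.
apply/splusP/splusP => [] [x xS xa]; exists x => //; by rewrite ?att_eq // -?att_eq.
Qed.

Lemma ISu_eq : IS_u F1 = IS_u F2.
Proof.
apply: functional_extensionality => S; apply: propositional_extensionality.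
rewrite /IS_u; split => [[H1 H2]|[H1 H2]].
- have H1' := H1; move/init_eq: H1' => H1'. split => //. by rewrite -sminus_eq // (init_no2 H1).
- have H1' := H1; move/init_eq: H1' => H1'. split => //. by rewrite sminus_eq // (init_no2 H1').
Qed.

Lemma ISuc_eq : IS_uc F1 = IS_uc F2.
Proof.
apply: functional_extensionality => S; apply: propositional_extensionality.
rewrite /IS_uc; split => [[H1 [H2 H3]]|[H1 [H2 H3]]].
- have H1' := H1; move/init_eq: H1' => H1'. have n2 := init_no2 H1.
  split; first exact H1'. split; first by rewrite -(sminus_eq S n2).
  move=> S' /init_eq HS' /(att_set_eq S' S n2). exact: H3.
- have H1' := H1; move/init_eq: H1' => H1'. have n2 := init_no2 H1'.
  split; first exact H1'. split; first by rewrite (sminus_eq S n2).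
  move=> S' /init_eq HS' /(att_set_eq S' S n2). exact: H3.
Qed.

Lemma ISc_eq : IS_c F1 = IS_c F2.
Proof.
apply: functional_extensionality => S; apply: propositional_extensionality.
rewrite /IS_c; split => [[H1 [S' H2 H3]]|[H1 [S' H2 H3]]].
- have H1' := H1; move/init_eq: H1' => H1'. have n2 := init_no2 H1.
  split; first exact H1'. exists S'; first by apply/init_eq.
  exact: (proj1 (att_set_eq S' S n2) H3).
- have H1' := H1; move/init_eq: H1' => H1'. have n2 := init_no2 H1'.
  split; first exact H1'. exists S'; first by apply/init_eq.
  exact: (proj2 (att_set_eq S' S n2) H3).
Qed.

Lemma splus_eq S : 1 \notin S -> splus F1 S = splus F2 S.
Proof.
move=> n1.
apply/fsetP => y; apply/splusP/splusP => [] [x xS xa]; exists x; try exact xS.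
- exact: att_sub.
- move: xa; rewrite att2E. case/orP => [H|/andP [/eqP H _]]; first exact H.
  by subst x; rewrite xS in n1.
Qed.

Lemma splus0_eq : splus F1 [fset 0] = splus F2 [fset 0].
Proof. apply: splus_eq. by rewrite inE. Qed.

Lemma reduct_eq : reduct F1 [fset 0] = reduct F2 [fset 0].
Proof.
rewrite /reduct -splus0_eq.
have h1 : 1 \in splus F1 [fset 0].
  apply/splusP; exists 0; first by rewrite inE. by rewrite att1E.
congr mkAF. apply/fsetP => [[x y]]; rewrite !inE /= !xpair_eqE.
case: (x =P 1) => [->|/eqP nx].
- by rewrite h1 /= !andbF.
- by rewrite !andFb !orbF.
Qed.

Lemma reach_mono alpha c1 c2 : reach alpha c1 c2 -> c1.2 `<=` c2.2.
Proof.
elim => [c|a b c st _ IH] //.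
apply: fsubset_trans IH. case: st => F S S' _ /=. exact: fsubsetUl.
Qed.

Lemma sst1 : sst F1 [fset 0].
Proof.
have range01 E y : admissible F1 E -> y \in E `|` splus F1 E -> (y == 0) || (y == 1).
  move=> [sub [cf _]] H.
  have n2 : 2 \notin E by apply: cf_no2 cf; rewrite att1E.
  case/fsetUP: H => [yE|/splusP [x xE xa]].
  + move: (fsubsetP sub y yE); rewrite /= !inE => H.
    case: y yE H => [|[|[|y]]] //= yE _. by rewrite yE in n2.
  + move: xa; rewrite att1E.
    case: x xE => [|[|[|x]]] xE; case: y => [|[|[|y]]] //= _. by rewrite xE in n2.
have adm : admissible F1 [fset 0].
  split; first by apply/fsubsetP => x /fset1P ->; rewrite !inE.
  split.
  + move=> a b /fset1P -> /fset1P ->; by rewrite att1E.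
  + move=> a b /fset1P -> Hab; exists 0; first by rewrite inE.
    move: Hab; rewrite !att1E. by case: a => [|[|[|a]]].
split; first exact adm.
move=> E' HE' _; apply/fsubsetP => y /(range01 _ _ HE') /orP [] /eqP ->;
  apply/fsetUP; [left; by rewrite inE | right; apply/splusP; exists 0; by rewrite ?inE ?att1E].
Qed.

Lemma not_sst2 : ~ sst F2 [fset 0].
Proof.
move=> [_ H].
have adm : admissible F2 [fset 1].
  split; first by apply/fsubsetP => x /fset1P ->; rewrite !inE.
  split.
  + move=> a b /fset1P -> /fset1P ->; by rewrite att2E att1E.
  + move=> a b /fset1P -> Hab; exists 1; first by rewrite inE.
    move: Hab; rewrite !att2E !att1E. by case: a => [|[|[|a]]].
have sub : [fset 0] `|` splus F2 [fset 0] `<=` [fset 1] `|` splus F2 [fset 1].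
  apply/fsubsetP => y /fsetUP [/fset1P ->|/splusP [x /fset1P -> xa]].
  + apply/fsetUP; right; apply/splusP; exists 1; [by rewrite inE | by rewrite att2E att1E].
  + apply/fsetUP; left; apply/fset1P. move: xa; rewrite att2E att1E. by case: y => [|[|[|y]]].
have h2 : 2 \in [fset 1] `|` splus F2 [fset 1].
  apply/fsetUP; right; apply/splusP; exists 1; [by rewrite inE | by rewrite att2E att1E].
move: (fsubsetP (H _ adm sub) 2 h2) => /fsetUP [/fset1P //|/splusP [x /fset1P -> xa]].
move: xa; by rewrite att2E att1E.
Qed.

Theorem theorem9 : ~ serialisable sst.
Proof.
move=> [alpha [beta [Hsel H]]].
have [F' [R B]] := (H F1 wf1 [fset 0]).1 sst1.
apply: not_sst2. apply/(H F2 wf2). exists F'; split; last exact B.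
inversion R as [c E1|c1 c2 c3 St R2 E1 E2]; subst.
- have : (0 \in ([fset 0] : argset)) by rewrite inE.
  by rewrite -H1 inE.
- inversion St as [F S S' Hal E1 E2]; subst.
  have sub := @reach_mono alpha _ _ R2. rewrite /= fset0U in sub.
  have ini : initial F1 S'.
    by case: (Hsel _ _ _ _ Hal) => [[]|[[]|[]]].
  have eS : S' = [fset 0].
    move: sub; rewrite fsubset1 => /orP [/eqP //|/eqP E].
    by case: ini => /eqP; rewrite E.
  subst S'.
  apply: (reach_step (c2 := (reduct F2 [fset 0], fset0 `|` [fset 0]))).
  + apply: Step. by rewrite -ISu_eq -ISuc_eq -ISc_eq.
  + by rewrite -reduct_eq.
Qed.
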